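(* Fix either an RSK growth diagram or a $d$-RSK growth diagram on a Young diagram $F$, and let $\alpha,\beta$ be partitions assigned to lattice points of the diagram. (i) If $\alpha$ is located weakly below and weakly to the left of $\beta$, then $\alpha\subseteq\beta$. (ii) If $\alpha,\beta$ are at the endpoints of a horizontal edge with $\alpha$ to the left of $\beta$, then $|\beta|-|\alpha|$ equals the sum of the entries in the column of cells below that edge; if they are at the endpoints of a vertical edge with $\alpha$ below $\beta$, then $|\beta|-|\alpha|$ equals the sum of the entries in the row of cells to the left of that edge. (iii) Reflecting all the data of the growth diagram (cells, entries, partitions) across the line $y=x$ gives a growth diagram of the same type (RSK or $d$-RSK) on the reflected Young diagram $F'$.
   Context: Partitions are finite weakly decreasing sequences of positive integers with $\lambda_i=0$ for $i>\ell(\lambda)$, $|\lambda|=\sum\lambda_i$; $d$-partitions have $\ell(\lambda)\le d$; $\alpha\subseteq\beta$ means $\alpha_i\le\beta_i$ for all $i$; $\alpha\prec\beta$ (also $\beta\succ\alpha$) means $\beta_1\ge\alpha_1\ge\beta_2\ge\alpha_2\ge\cdots$. Young diagrams lie in the first quadrant with unit cells at integer lattice points, left-justified, rows stacked upward from the $x$-axis; lattice points are cell corners, edges are cell sides; a filling assigns nonnegative integers to cells. A growth diagram on $F$ is a filling plus a partition at each lattice point, with $\emptyset$ at all lattice points on the coordinate axes, such that each cell satisfies a local rule. For a cell with entry $m$ and bottom-left, top-left, bottom-right, top-right corners $\kappa,\mu,\nu,\rho$: RSK local rule: $\mu\succ\kappa\prec\nu$, $\mu\prec\rho\succ\nu$,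 $\rho_1=m+\max(\mu_1,\nu_1)$, and $\rho_i+\kappa_{i-1}=\min(\mu_{i-1},\nu_{i-1})+\max(\mu_i,\nu_i)$ for all $i\ge2$. $d$-RSK local rule: all four are $d$-partitions, $\mu\succ\kappa\prec\nu$, $\mu\prec\rho\succ\nu$, $m=0$ or $\kappa_d=0$, $\rho_1+\kappa_d=m+\min(\mu_d,\nu_d)+\max(\mu_1,\nu_1)$, and $\rho_i+\kappa_{i-1}=\min(\mu_{i-1},\nu_{i-1})+\max(\mu_i,\nu_i)$ for $2\le i\le d$. An RSK (resp. $d$-RSK) growth diagram is one in which every cell satisfies the RSK (resp. $d$-RSK) local rule. *)

(* Defs.v *)
From mathcomp Require Import all_boot.
Set Implicit Arguments. Unset Strict Implicit. Unset Printing Implicit Defensive.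

Definition is_partition (l : seq nat) : bool :=
  sorted geq l && all (fun a => 0 < a) l.

(* 1-based parts: part l i = lambda_i, zero beyond the length (and part l 0 = 0,
   never used). *)
Definition part (l : seq nat) (i : nat) : nat :=
  if i is i'.+1 then nth 0 l i' else 0.

Definition size_part (l : seq nat) : nat := sumn l.

Definition is_dpartition (d : nat) (l : seq nat) : bool :=
  is_partition l && (size l <= d).

Definition subpart (a b : seq nat) : Prop := forall i, part a i <= part b i.

Definition interlace (a b : seq nat) : Prop :=
  forall i, 0 < i -> part a i <= part b i /\ part b i.+1 <= part a i.

(* RSK local rule for a cell with entry m and corners
   kappa (bottom-left), mu (top-left), nu (bottom-right), rho (top-right). *)
Definition rsk_rule (m : nat) (ka mu nu rho : seq nat) : Prop :=
  interlace ka mu /\ interlace ka nu /\ interlace mu rho /\ interlace nu rho /\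
  part rho 1 = m + maxn (part mu 1) (part nu 1) /\
  (forall i, 2 <= i ->
     part rho i + part ka i.-1
     = minn (part mu i.-1) (part nu i.-1) + maxn (part mu i) (part nu i)).

Definition drsk_rule (d : nat) (m : nat) (ka mu nu rho : seq nat) : Prop :=
  is_dpartition d ka /\ is_dpartition d mu /\ is_dpartition d nu /\
  is_dpartition d rho /\
  interlace ka mu /\ interlace ka nu /\ interlace mu rho /\ interlace nu rho /\
  (m == 0) || (part ka d == 0) /\
  part rho 1 + part ka d = m + minn (part mu d) (part nu d)
                           + maxn (part mu 1) (part nu 1) /\
  (forall i, 2 <= i <= d ->
     part rho i + part ka i.-1
     = minn (part mu i.-1) (part nu i.-1) + maxn (part mu i) (part nu i)).

Definition local_rule (k : option nat) : nat -> seq nat -> seq nat -> seq nat -> seq nat -> Prop :=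
  match k with None => rsk_rule | Some d => drsk_rule d end.

(* Young diagram of shape F (a partition): the cell with lower-left corner (i,j)
   (column i, row j, 0-based, rows stacked upward) belongs to F iff i < F_(j+1). *)
Definition cell (F : seq nat) (i j : nat) : bool := i < nth 0 F j.

Definition lattice_pt (F : seq nat) (x y : nat) : bool :=
  [|| cell F x y, (0 < x) && cell F x.-1 y, (0 < y) && cell F x y.-1
    | [&& 0 < x, 0 < y & cell F x.-1 y.-1]].

(* Horizontal edge from (x,y) to (x+1,y) is a side of a cell of F. *)
Definition hedge (F : seq nat) (x y : nat) : bool :=
  cell F x y || (0 < y) && cell F x y.-1.

(* Vertical edge from (x,y) to (x,y+1) is a side of a cell of F. *)
Definition vedge (F : seq nat) (x y : nat) : bool :=
  cell F x y || (0 < x) && cell F x.-1 y.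

Definition growth_diagram (k : option nat) (F : seq nat)
    (f : nat -> nat -> nat) (P : nat -> nat -> seq nat) : Prop :=
  (forall x y, lattice_pt F x y -> is_partition (P x y)) /\
  (forall x y, lattice_pt F x y -> (x == 0) || (y == 0) -> P x y = [::]) /\
  (forall i j, cell F i j ->
     local_rule k (f i j) (P i j) (P i j.+1) (P i.+1 j) (P i.+1 j.+1)).

(* Conjugate partition: the Young diagram reflected across y = x. *)
Definition conj_part (F : seq nat) : seq nat :=
  [seq count (fun r => i < r) F | i <- iota 0 (head 0 F)].

(* Main.v *)
Require Import Defs.
From mathcomp Require Import all_boot zify.

Lemma geq_trans' : transitive geq.
Proof. move=> a b c /= h1 h2; exact: leq_trans h2 h1. Qed.

Lemma nth_mono F i j : sorted geq F -> i <= j -> nth 0 F j <= nth 0 F i.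
Proof.
move=> hs hij; case: (ltnP j (size F)) => hj.
  have hi : i < size F by exact: leq_ltn_trans hij hj.
  have := (sorted_leq_nth geq_trans' (fun x => leqnn x) 0 hs); apply.
  by rewrite inE. by rewrite inE. done.
by rewrite nth_default.
Qed.

Lemma latticeE F x y : sorted geq F ->
  lattice_pt F x y = (x <= nth 0 F y.-1) && (0 < nth 0 F y.-1).
Proof.
move=> hs; rewrite /lattice_pt /cell.
case: y => [|y] /=; case: x => [|x] /=; try lia.
all: have := @nth_mono F _ _ hs (leqnSn y); lia.
Qed.

Lemma sumn_nth l N : size l <= N -> sumn l = \sum_(0 <= i < N) nth 0 l i.
Proof.
elim: l N => [|a l IH] N hN.
  by rewrite big1 // => i _; rewrite nth_nil.
case: N hN => [|N] //= hN; rewrite big_nat_recl //= (IH N hN).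
by [].
Qed.

Lemma rsk_size m ka mu nu rho : rsk_rule m ka mu nu rho ->
  sumn rho + sumn ka = m + sumn mu + sumn nu.
Proof.
case=> _ [_ [_ [_ [h1 hi]]]]; rewrite /= in h1.
set N := size ka + size mu + size nu + size rho.
have e1 : sumn rho = nth 0 rho 0 + \sum_(0 <= i < N) nth 0 rho i.+1.
  by rewrite (@sumn_nth _ N.+1) ?big_nat_recl // /N; lia.
have e2 : sumn ka = \sum_(0 <= i < N) nth 0 ka i by rewrite (@sumn_nth _ N) // /N; lia.
have e3 : sumn mu + sumn nu = maxn (nth 0 mu 0) (nth 0 nu 0)
   + \sum_(0 <= i < N) maxn (nth 0 mu i.+1) (nth 0 nu i.+1)
   + \sum_(0 <= i < N) minn (nth 0 mu i) (nth 0 nu i).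
  rewrite (@sumn_nth mu N.+1) ?(@sumn_nth nu N.+1) ?/N; try lia.
  rewrite -big_split /=.
  rewrite (eq_big_nat _ _ (F2 := fun i => maxn (nth 0 mu i) (nth 0 nu i) + minn (nth 0 mu i) (nth 0 nu i))); last by move=> i _; lia.
  rewrite big_split /= big_nat_recl // [\sum_(0 <= i < N.+1) _]big_nat_recr //=.
  have hm : nth 0 mu N = 0 by rewrite nth_default // /N; lia.
  have hn : nth 0 nu N = 0 by rewrite nth_default // /N; lia.
  by rewrite hm hn minn0 addn0.
have e4 : \sum_(0 <= i < N) (nth 0 rho i.+1 + nth 0 ka i)
        = \sum_(0 <= i < N) (minn (nth 0 mu i) (nth 0 nu i) + maxn (nth 0 mu i.+1) (nth 0 nu i.+1)).
  by apply: eq_big_nat => i _; exact: (hi i.+2).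
move: e4; rewrite !big_split /=; lia.
Qed.

Lemma drsk_size d m ka mu nu rho : 0 < d -> drsk_rule d m ka mu nu rho ->
  sumn rho + sumn ka = m + sumn mu + sumn nu.
Proof.
case: d => [//|d] _.
case=> /andP[_ sk] [/andP[_ sm] [/andP[_ sn] [/andP[_ sr] [_ [_ [_ [_ [_ [h1 hi]]]]]]]]].
rewrite /= in h1.
have e1 : sumn rho = nth 0 rho 0 + \sum_(0 <= i < d) nth 0 rho i.+1.
  by rewrite (@sumn_nth _ d.+1) ?big_nat_recl.
have e2 : sumn ka = \sum_(0 <= i < d) nth 0 ka i + nth 0 ka d.
  by rewrite (@sumn_nth _ d.+1) ?big_nat_recr.
have e3 : sumn mu + sumn nu = maxn (nth 0 mu 0) (nth 0 nu 0)
   + \sum_(0 <= i < d) maxn (nth 0 mu i.+1) (nth 0 nu i.+1)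
   + \sum_(0 <= i < d) minn (nth 0 mu i) (nth 0 nu i) + minn (nth 0 mu d) (nth 0 nu d).
  rewrite (@sumn_nth mu d.+1) ?(@sumn_nth nu d.+1) //.
  rewrite -big_split /=.
  rewrite (eq_big_nat _ _ (F2 := fun i => maxn (nth 0 mu i) (nth 0 nu i) + minn (nth 0 mu i) (nth 0 nu i))); last by move=> i _; lia.
  rewrite big_split /= big_nat_recl // [\sum_(0 <= i < d.+1) _]big_nat_recr //=.
  by rewrite !addnA.
have e4 : \sum_(0 <= i < d) (nth 0 rho i.+1 + nth 0 ka i)
        = \sum_(0 <= i < d) (minn (nth 0 mu i) (nth 0 nu i) + maxn (nth 0 mu i.+1) (nth 0 nu i.+1)).
  by apply: eq_big_nat => i /andP[_ hid]; apply: (hi i.+2); rewrite /= ltnS hid.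
move: e4; rewrite !big_split /=; lia.
Qed.

Lemma rule_size k m ka mu nu rho : (forall d, k = Some d -> 0 < d) ->
  local_rule k m ka mu nu rho -> sumn rho + sumn ka = m + sumn mu + sumn nu.
Proof.
case: k => [d|] hd /=; last exact: rsk_size.
by apply: drsk_size; apply: hd.
Qed.

Lemma rule_inter k m ka mu nu rho : local_rule k m ka mu nu rho ->
  [/\ interlace ka mu, interlace ka nu, interlace mu rho & interlace nu rho].
Proof.
case: k => [d|] /=.
  by case=> _ [_ [_ [_ [? [? [? [? _]]]]]]].
by case=> ? [? [? [? _]]].
Qed.

Lemma rule_swap k m ka mu nu rho : local_rule k m ka mu nu rho ->
  local_rule k m ka nu mu rho.
Proof.
case: k => [d|] /=.
  case=> ? [? [? [? [? [? [? [? [? [h1 hi]]]]]]]]].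
  do 9 (split; first done). split; first by rewrite minnC maxnC.
  by move=> i hi'; rewrite minnC maxnC; apply: hi.
case=> ? [? [? [? [h1 hi]]]].
do 4 (split; first done). split; first by rewrite maxnC.
by move=> i hi'; rewrite minnC maxnC; apply: hi.
Qed.

Lemma inter_sub a b : interlace a b -> subpart a b.
Proof. by move=> h [|i] //; case: (h i.+1). Qed.

Lemma sub_trans a b c : subpart a b -> subpart b c -> subpart a c.
Proof. by move=> h1 h2 i; exact: leq_trans (h1 i) (h2 i). Qed.

Lemma count_nth F i j : sorted geq F ->
  (i < count (fun r => j < r) F) = (j < nth 0 F i).
Proof.
elim: F i => [|a F IH] i hs /=; first by rewrite nth_nil.
have hall : all (geq a) F by apply: order_path_min hs; exact: geq_trans'.
have hs' := path_sorted hs.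
have hc : ~~ (j < a) -> count (fun r => j < r) F = 0.
  move=> hja; rewrite (eq_in_count (a2 := pred0)) ?count_pred0 // => x hx /=.
  have := allP hall x hx; rewrite /=; lia.
case: i => [|i] /=.
  case: (ltnP j a) => hja; first by rewrite add1n.
  by rewrite hc ?ltnNge ?hja.
case: (ltnP j a) => hja; first by rewrite add1n ltnS IH.
have := @nth_mono (a :: F) 0 i.+1 hs (leq0n _); rewrite /= hc; last by rewrite -leqNgt.
lia.
Qed.

Lemma nth_conj F j : sorted geq F ->
  nth 0 (conj_part F) j = count (fun r => j < r) F.
Proof.
move=> hs; rewrite /conj_part.
case: (ltnP j (head 0 F)) => h.
  by rewrite (nth_map 0) ?size_iota // nth_iota.
rewrite nth_default ?size_map ?size_iota //.
apply/esym/eqP; rewrite eqn0Ngt count_nth //; rewrite -leqNgt.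
by case: F hs h.
Qed.

Lemma cellC F i j : sorted geq F -> cell (conj_part F) i j = cell F j i.
Proof. by move=> hs; rewrite /cell nth_conj // count_nth. Qed.

Lemma latticeC F x y : sorted geq F -> lattice_pt (conj_part F) x y = lattice_pt F y x.
Proof.
move=> hs; rewrite /lattice_pt !cellC //.
by case: (cell F y x) (cell F y x.-1) (cell F y.-1 x) (cell F y.-1 x.-1) (0 < x) (0 < y)
  => [] [] [] [] [] [].
Qed.
Arguments rule_inter {k m ka mu nu rho}.
Arguments rule_size {k m ka mu nu rho}.
Arguments rule_swap {k m ka mu nu rho}.

Theorem proposition3p1 (k : option nat) (F : seq nat)
    (f : nat -> nat -> nat) (P : nat -> nat -> seq nat) :
  (forall d, k = Some d -> 0 < d) ->
  is_partition F ->
  growth_diagram k F f P ->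
  (* (i) *)
  (forall x1 y1 x2 y2, lattice_pt F x1 y1 -> lattice_pt F x2 y2 ->
     x1 <= x2 -> y1 <= y2 -> subpart (P x1 y1) (P x2 y2)) /\
  (* (ii) horizontal edges *)
  (forall x y, hedge F x y ->
     size_part (P x.+1 y) = size_part (P x y) + \sum_(j < y) f x j) /\
  (* (ii) vertical edges *)
  (forall x y, vedge F x y ->
     size_part (P x y.+1) = size_part (P x y) + \sum_(i < x) f i y) /\
  (* (iii) *)
  growth_diagram k (conj_part F) (fun i j => f j i) (fun x y => P y x).
Proof.
move=> hd /andP[hs _] [hpart [haxis hrule]].
have stepH : forall x y, lattice_pt F x y -> lattice_pt F x.+1 y ->
    subpart (P x y) (P x.+1 y).
  move=> x y _; rewrite latticeE // => /andP[h1 h2].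
  case: y h1 h2 => [|y] /= h1 h2.
    have hc : cell F x 0 by rewrite /cell.
    by case: (rule_inter (hrule _ _ hc)) => _ /inter_sub.
  have hc : cell F x y by rewrite /cell.
  by case: (rule_inter (hrule _ _ hc)) => _ _ /inter_sub.
have stepV : forall x y, lattice_pt F x y -> lattice_pt F x y.+1 ->
    subpart (P x y) (P x y.+1).
  move=> x y _; rewrite latticeE // => /andP[h1 h2] /=; rewrite /= in h1 h2.
  case: (ltnP x (nth 0 F y)) => h3.
    have hc : cell F x y by rewrite /cell.
    by case: (rule_inter (hrule _ _ hc)) => /inter_sub.
  case: x h1 h3 => [|x] h1 h3; first lia.
  have hc : cell F x y by rewrite /cell.
  by case: (rule_inter (hrule _ _ hc)) => _ _ _ /inter_sub.
have chainH : forall n x y, lattice_pt F x y -> lattice_pt F (x + n) y ->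
    subpart (P x y) (P (x + n) y).
  elim=> [|n IH] x y h1 h2; first by rewrite addn0.
  have h3 : lattice_pt F (x + n) y by move: h2; rewrite !latticeE //; lia.
  apply: sub_trans (IH _ _ h1 h3) _; rewrite addnS; apply: stepH => //.
  by rewrite -addnS.
have chainV : forall n x y, lattice_pt F x y -> lattice_pt F x (y + n) ->
    subpart (P x y) (P x (y + n)).
  elim=> [|n IH] x y h1 h2; first by rewrite addn0.
  have h3 : lattice_pt F x (y + n).
    move: h2; rewrite !latticeE //.
    have := @nth_mono F (y + n).-1 (y + n.+1).-1 hs ltac:(lia); lia.
  apply: sub_trans (IH _ _ h1 h3) _; rewrite addnS; apply: stepV => //.
  by rewrite -addnS.
split.
  move=> x1 y1 x2 y2 h1 h2 hx hy.
  have h3 : lattice_pt F x2 y1.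
    move: h1 h2; rewrite !latticeE //.
    have := @nth_mono F y1.-1 y2.-1 hs ltac:(lia); lia.
  have a := chainH (x2 - x1) x1 y1 h1; rewrite subnKC // in a.
  have b := chainV (y2 - y1) x2 y1 h3; rewrite subnKC // in b.
  exact: sub_trans (a h3) (b h2).
split.
  move=> x y hh.
  have hcj : forall j, j < y -> cell F x j.
    move=> j hj; move: hh; rewrite /hedge /cell.
    have := @nth_mono F j y.-1 hs ltac:(lia); have := @nth_mono F y.-1 y hs ltac:(lia).
    case: y hj => [|y] //= hj; lia.
  have hc0 : cell F x 0.
    case: (posnP y) => [y0|yp]; last exact: hcj.
    by move: hh; rewrite /hedge y0 /= orbF.
  have : forall n, n <= y ->
      size_part (P x.+1 n) = size_part (P x n) + \sum_(j < n) f x j.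
    elim=> [|n IH] hn.
      rewrite big_ord0 !haxis ?orbT //; rewrite latticeE //=; move: hc0; rewrite /cell; lia.
    have := rule_size hd (hrule _ _ (hcj n hn)).
    rewrite big_ord_recr /= /size_part in IH * => e.
    have := IH (ltnW hn); lia.
  by apply.
split.
  move=> x y hh.
  have hci : forall i, i < x -> cell F i y.
    move=> i hi; move: hh; rewrite /vedge /cell.
    case: x hi => [|x] //= hi; lia.
  have hc0 : cell F 0 y.
    case: (posnP x) => [x0|xp]; last exact: hci.
    by move: hh; rewrite /vedge x0 /= orbF.
  have : forall n, n <= x ->
      size_part (P n y.+1) = size_part (P n y) + \sum_(i < n) f i y.
    elim=> [|n IH] hn.
      rewrite big_ord0 !haxis //; rewrite latticeE //=; move: hc0; rewrite /cell;
        try lia.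
      have := @nth_mono F y.-1 y hs ltac:(lia); lia.
    have := rule_size hd (hrule _ _ (hci n hn)).
    rewrite big_ord_recr /= /size_part in IH * => e.
    have := IH (ltnW hn); lia.
  by apply.
split.
  by move=> x y; rewrite latticeC //; apply: hpart.
split.
  by move=> x y; rewrite latticeC // orbC; apply: haxis.
move=> i j; rewrite cellC // => hc.
exact: rule_swap (hrule _ _ hc).
Qed.
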